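(* Every perinormal domain is weakly normal (and hence seminormal).
   Context: All rings are commutative with identity; ''local'' means having a unique maximal ideal; an overring of a domain $R$ is a ring between $R$ and its fraction field. A ring extension $A \subseteq B$ satisfies going-down if whenever $\mathfrak{p} \subset \mathfrak{q}$ are primes of $A$ and $Q$ is a prime of $B$ with $Q \cap A = \mathfrak{q}$, there is a prime $P \subseteq Q$ of $B$ with $P \cap A = \mathfrak{p}$. A domain $R$ is perinormal if every local overring $S$ of $R$ such that $R \subseteq S$ satisfies going-down is a localization of $R$. A domain $R$ is weakly normal if for every integral overring $S$ of $R$ such that $\operatorname{Spec} S \to \operatorname{Spec} R$ is a bijection and, for every $P \in \operatorname{Spec} S$ with $\mathfrak{p} = P \cap R$, the residue field extension $R_{\mathfrak{p}}/\mathfrak{p}R_{\mathfrak{p}} \to S_P/PS_P$ is purely inseparable, one has $S = R$. A domain $R$ is seminormal if whenever $x$ in its fraction field satisfies $x^2, x^3 \in R$, then $x \in R$. *)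

(* Defs.v *)
(* Commutative algebra of a domain R, realized as a subring
   of its fraction field K; overrings, ideals, primes are predicates on K. *)
From mathcomp Require Import all_boot all_algebra.
Set Implicit Arguments. Unset Strict Implicit. Unset Printing Implicit Defensive.
Import GRing.Theory.
Local Open Scope ring_scope.

Section CommAlg.
Variable K : fieldType.
Implicit Types (A B I J P Q U : K -> Prop).

Definition is_subring A : Prop :=
  A 1 /\ (forall x y, A x -> A y -> A (x - y)) /\ (forall x y, A x -> A y -> A (x * y)).

Definition is_frac_field A : Prop :=
  forall x : K, exists a b, A a /\ A b /\ b != 0 /\ x = a / b.

Definition overring A B : Prop := is_subring B /\ (forall x, A x -> B x).

Definition set_eq A B : Prop := forall x, A x <-> B x.

Definition is_ideal A I : Prop :=
  (forall x, I x -> A x) /\ I 0 /\ (forall x y, I x -> I y -> I (x - y)) /\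
  (forall a x, A a -> I x -> I (a * x)).

Definition prime_ideal A P : Prop :=
  is_ideal A P /\ ~ P 1 /\ (forall a b, A a -> A b -> P (a * b) -> P a \/ P b).

Definition maximal_ideal A M : Prop :=
  is_ideal A M /\ ~ M 1 /\
  (forall J, is_ideal A J -> (forall x, M x -> J x) -> set_eq J M \/ J 1).

Definition local_ring A : Prop :=
  exists M, maximal_ideal A M /\ (forall N, maximal_ideal A N -> set_eq N M).

Definition contr A P : K -> Prop := fun x => P x /\ A x.

Definition mult_set A U : Prop :=
  (forall u, U u -> A u) /\ U 1 /\ ~ U 0 /\ (forall u v, U u -> U v -> U (u * v)).

Definition localization A U : K -> Prop :=
  fun x => exists a u, A a /\ U u /\ x = a / u.

Definition is_localization_of A B : Prop :=
  exists U, mult_set A U /\ set_eq B (localization A U).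

Definition loc_at A P : K -> Prop := localization A (fun u => A u /\ ~ P u).
Definition ext_loc_at A P : K -> Prop :=
  fun x => exists a u, P a /\ (A u /\ ~ P u) /\ x = a / u.

Definition going_down A B : Prop :=
  forall p q Q, prime_ideal A p -> prime_ideal A q -> (forall x, p x -> q x) ->
    prime_ideal B Q -> set_eq (contr A Q) q ->
    exists P, prime_ideal B P /\ (forall x, P x -> Q x) /\ set_eq (contr A P) p.

Definition perinormal R : Prop :=
  forall S, overring R S -> local_ring S -> going_down R S -> is_localization_of R S.

Definition integral_over A B : Prop :=
  forall s, B s -> exists f : {poly K},
    f \is monic /\ (forall i, A f`_i) /\ root f s.

Definition spec_bijective A B : Prop :=
  (forall p, prime_ideal A p -> exists P, prime_ideal B P /\ set_eq (contr A P) p) /\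
  (forall P1 P2, prime_ideal B P1 -> prime_ideal B P2 ->
     set_eq (contr A P1) (contr A P2) -> set_eq P1 P2).

(* The residue field extension A_p/pA_p -> B_P/PB_P (p = P ∩ A) is purely
   inseparable: every y of B_P/PB_P has a power y^k, k = 1 or k a power of the
   characteristic p0 of the residue field (p0%:R ∈ P), lying in A_p/pA_p. *)
Definition residue_purely_insep A B P : Prop :=
  forall y, loc_at B P y -> exists (k : nat) (r : K),
    (k = 1%N \/ exists p0 n, prime p0 /\ P p0%:R /\ k = (p0 ^ n)%N) /\
    loc_at A (contr A P) r /\ ext_loc_at B P (y ^+ k - r).

Definition weakly_normal R : Prop :=
  forall S, overring R S -> integral_over R S -> spec_bijective R S ->
    (forall P, prime_ideal S P -> residue_purely_insep R S P) ->
    set_eq S R.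

Definition seminormal R : Prop :=
  forall x : K, R (x ^+ 2) -> R (x ^+ 3) -> R x.

End CommAlg.

(* Main.v *)
Require Import Defs.
From mathcomp Require Import all_boot all_algebra.
From mathcomp Require Import all_boot all_algebra.
From mathcomp Require classical_sets boolp.
From mathcomp Require Import ring.
From Stdlib Require Import Classical.
Set Implicit Arguments. Unset Strict Implicit. Unset Printing Implicit Defensive.
Import GRing.Theory.
Local Open Scope ring_scope.

Ltac fld := field; do ? (apply/andP; split); done.

Section Work.
Variable K : fieldType.
Implicit Types (A B I J P Q U : K -> Prop).

Lemma sr0 A : is_subring A -> A 0.
Proof. move=> [h1 [hs _]]; rewrite -(subrr (1:K)); exact: hs. Qed.
Lemma srN A x : is_subring A -> A x -> A (- x).
Proof. move=> hA hx; have h0 := sr0 hA; case: hA => _ [hs _]; have := hs 0 x h0 hx; by rewrite sub0r. Qed.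
Lemma srD A x y : is_subring A -> A x -> A y -> A (x + y).
Proof. move=> hA hx hy; rewrite -[y]opprK; case: (hA) => _ [hs _]; apply: hs => //; exact: srN. Qed.
Lemma srB A x y : is_subring A -> A x -> A y -> A (x - y).
Proof. by case=> _ [hs _]; apply: hs. Qed.
Lemma srM A x y : is_subring A -> A x -> A y -> A (x * y).
Proof. by case=> _ [_ hm]; apply: hm. Qed.
Lemma sr1 A : is_subring A -> A 1.
Proof. by case. Qed.
Lemma srX A x n : is_subring A -> A x -> A (x ^+ n).
Proof. move=> hA hx; elim: n => [|n IH]; first by rewrite expr0; exact: sr1.
by rewrite exprS; apply: srM. Qed.
Lemma srnat A n : is_subring A -> A n%:R.
Proof. move=> hA; elim: n => [|n IH]; first exact: sr0.
by rewrite -addn1 natrD; apply: srD => //; exact: sr1. Qed.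

Lemma id0 A I : is_ideal A I -> I 0.
Proof. by case=> _ []. Qed.
Lemma idsub A I x : is_ideal A I -> I x -> A x.
Proof. by case=> h _; apply: h. Qed.
Lemma idB A I x y : is_ideal A I -> I x -> I y -> I (x - y).
Proof. by case=> _ [_ [h _]]; apply: h. Qed.
Lemma idN A I x : is_ideal A I -> I x -> I (- x).
Proof. move=> hI hx; have := idB hI (id0 hI) hx; by rewrite sub0r. Qed.
Lemma idD A I x y : is_ideal A I -> I x -> I y -> I (x + y).
Proof. move=> hI hx hy; rewrite -[y]opprK; exact: (idB hI hx (idN hI hy)). Qed.
Lemma idMl A I a x : is_ideal A I -> A a -> I x -> I (a * x).
Proof. by case=> _ [_ [_ h]]; apply: h. Qed.
Lemma idMr A I a x : is_ideal A I -> A a -> I x -> I (x * a).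
Proof. by move=> hI ha hx; rewrite mulrC; apply: idMl hI ha hx. Qed.
Lemma idsum A I (n : nat) (F : nat -> K) : is_ideal A I -> (forall i, (i < n)%N -> I (F i)) ->
  I (\sum_(i < n) F i).
Proof.
move=> hI hF; elim: n hF => [|n IH] hF; first by rewrite big_ord0; exact: (id0 hI).
rewrite big_ord_recr /=; apply: (idD hI).
  by apply: IH => i hi; apply: hF; apply: ltnW.
by apply: hF.
Qed.
Lemma srsum A (n : nat) (F : nat -> K) : is_subring A -> (forall i, (i < n)%N -> A (F i)) ->
  A (\sum_(i < n) F i).
Proof.
move=> hI hF; elim: n hF => [|n IH] hF; first by rewrite big_ord0; exact: (sr0 hI).
rewrite big_ord_recr /=; apply: srD => //.
  by apply: IH => i hi; apply: hF; apply: ltnW.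
by apply: hF.
Qed.

Lemma prime_pow A P x n : prime_ideal A P -> is_subring A -> A x -> P (x ^+ n.+1) -> P x.
Proof.
move=> [hI [h1 hp]] hA hx; elim: n => [|n IH]; first by rewrite expr1.
rewrite exprS => h; case: (hp _ _ hx (srX _ hA hx) h) => //.
Qed.

Definition avoid A J U X := is_ideal A X /\ (forall y, J y -> X y) /\ (forall u, U u -> ~ X u).

Lemma zorn_ideal A J U : is_ideal A J -> (forall u, U u -> ~ J u) ->
  exists Q, avoid A J U Q /\ (forall X, avoid A J U X -> (forall y, Q y -> X y) -> forall y, X y -> Q y).
Proof.
move=> hJ hJU.
pose T := {X : K -> Prop | avoid A J U X}.
have t0 : T by exists J; split => //.
pose Rl := fun (s t : T) => boolp.asbool (forall y, sval s y -> sval t y).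
have := @classical_sets.ZL_preorder T t0 Rl.
case.
- by move=> t; apply/boolp.asboolP.
- move=> r s t /boolp.asboolP h1 /boolp.asboolP h2; apply/boolp.asboolP => y /h1; exact: h2.
- move=> C hC.
  pose B := fun y => J y \/ exists X : T, C X /\ sval X y.
  have hB : avoid A J U B.
    split; last split.
    + split; last split; last split.
      * move=> y [/(idsub hJ)//|[X [_ hX]]]; case: (svalP X) => hX' _; exact: idsub hX' hX.
      * by left; exact: id0 hJ.
      * move=> x y [hx|[X [CX hx]]] [hy|[Y [CY hy]]].
        -- by left; apply: (idB hJ).
        -- right; exists Y; split => //; case: (svalP Y) => hY [hJY _].
           by apply: (idB hY) => //; apply: hJY.
        -- right; exists X; split => //; case: (svalP X) => hX [hJX _].
           by apply: (idB hX) => //; apply: hJX.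
        -- case: (hC _ _ CX CY) => /boolp.asboolP hXY.
           ++ right; exists Y; split => //; case: (svalP Y) => hY _.
              by apply: (idB hY) => //; apply: hXY.
           ++ right; exists X; split => //; case: (svalP X) => hX _.
              by apply: (idB hX) => //; apply: hXY.
      * move=> a x ha [hx|[X [CX hx]]]; first by left; apply: idMl ha hx.
        right; exists X; split => //; case: (svalP X) => hX _; exact: idMl hX ha hx.
    + by move=> y hy; left.
    + move=> u hu [hx|[X [CX hx]]]; first exact: hJU hu hx.
      by case: (svalP X) => _ [_ h]; exact: h hu hx.
  exists (exist _ B hB) => s Cs; apply/boolp.asboolP => y hy /=; right; exists s; split => //.
move=> [Q hQ] hmax; exists Q; split => //.
move=> X hX hQX y hy.
have := hmax (exist _ X hX); rewrite /Rl /=.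
move=> h; have /boolp.asboolP := h (introT (boolp.asboolP _) hQX); exact.
Qed.

Definition addI A Q a : K -> Prop := fun y => exists q r, Q q /\ A r /\ y = q + a * r.

Lemma addI_ideal A Q a : is_subring A -> is_ideal A Q -> A a -> is_ideal A (addI A Q a).
Proof.
move=> hA hQ ha; split; last split; last split.
- move=> y [q [r [hq [hr ->]]]]; apply: srD => //; [exact: idsub hQ hq | exact: srM].
- exists 0, 0; split; first exact: id0 hQ; split; first exact: sr0; by rewrite mulr0 addr0.
- move=> x y [q1 [r1 [h1 [h1' ->]]]] [q2 [r2 [h2 [h2' ->]]]].
  exists (q1 - q2), (r1 - r2); split; first exact: idB hQ h1 h2.
  split; first exact: srB. ring.
- move=> b y hb [q [r [hq [hr ->]]]]; exists (b * q), (b * r); split; first exact: idMl hQ hb hq.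
  split; first exact: srM. ring.
Qed.

Lemma avoid_max_prime A J U Q : is_subring A -> U 1 -> (forall u v, U u -> U v -> U (u*v)) ->
  avoid A J U Q -> (forall X, avoid A J U X -> (forall y, Q y -> X y) -> forall y, X y -> Q y) ->
  prime_ideal A Q.
Proof.
move=> hA hU1 hUM [hQ [hJQ hQU]] hmax; split => //; split; first exact: hQU.
move=> a b ha hb hab; apply: NNPP => /not_or_and [na nb].
have ex : forall c, A c -> ~ Q c -> exists u q r, U u /\ Q q /\ A r /\ u = q + c * r.
  move=> c hc nc; apply: NNPP => hne.
  have hav : avoid A J U (addI A Q c).
    split; first exact: addI_ideal.
    split.
    + move=> y hy; exists y, 0; split; first exact: hJQ; split; first exact: sr0.
      by rewrite mulr0 addr0.
    + move=> u hu [q [r [hq [hr he]]]]; apply: hne; exists u, q, r; done.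
  apply: nc; apply: (hmax _ hav).
  + move=> y hy; exists y, 0; split => //; split; first exact: sr0; by rewrite mulr0 addr0.
  + exists 0, 1; split; first exact: id0 hQ; split; first exact: sr1; by rewrite mulr1 add0r.
have [u1 [q1 [r1 [hu1 [hq1 [hr1 e1]]]]]] := ex a ha na.
have [u2 [q2 [r2 [hu2 [hq2 [hr2 e2]]]]]] := ex b hb nb.
apply: (hQU _ (hUM _ _ hu1 hu2)).
have -> : u1 * u2 = (q2 + b * r2) * q1 + (r1 * q2) * a + (r1 * r2) * (a * b).
  rewrite e1 e2; ring.
have hq2A := idsub hQ hq2; have hq1A := idsub hQ hq1.
apply: (idD hQ); first apply: (idD hQ).
- apply: (idMl hQ) => //; apply: srD => //; exact: srM.
- apply: (idMr hQ) => //; apply: (idMl hQ) => //.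
- by apply: (idMl hQ) => //; exact: srM.
Qed.

Lemma idXB S Q a b n : is_subring S -> is_ideal S Q -> S a -> S b -> Q (a - b) -> Q (a ^+ n - b ^+ n).
Proof.
move=> hS hQ ha hb hab; elim: n => [|n IH]; first by rewrite !expr0 subrr; exact: id0 hQ.
have -> : a ^+ n.+1 - b ^+ n.+1 = a * (a ^+ n - b ^+ n) + b ^+ n * (a - b).
  rewrite !exprS; ring.
apply: (idD hQ); apply: (idMl hQ) => //; exact: srX.
Qed.

Lemma going_up R S P1 p2 : is_subring R -> overring R S -> integral_over R S ->
  prime_ideal S P1 -> prime_ideal R p2 -> (forall y, contr R P1 y -> p2 y) ->
  exists Q, prime_ideal S Q /\ (forall y, P1 y -> Q y) /\ set_eq (contr R Q) p2.
Proof.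
move=> hR [hS hRS] hint hP1 hp2 hP1p2.
have [hp2I [hp21 hp2p]] := hp2.
pose U := fun u => R u /\ ~ p2 u.
have hU1 : U 1 by split => //; exact: sr1.
have hUM : forall u v, U u -> U v -> U (u * v).
  move=> u v [hu nu] [hv nv]; split; first exact: srM.
  by case/(hp2p _ _ hu hv).
have hdis : forall u, U u -> ~ P1 u.
  by move=> u [hu nu] h; apply: nu; apply: hP1p2; split.
have [Q [hav hmax]] := zorn_ideal hP1.1 hdis.
have hQp := avoid_max_prime hS hU1 hUM hav hmax.
have [hQ [hP1Q hQU]] := hav.
have hQR : forall y, contr R Q y -> p2 y.
  move=> y [hy hyR]; apply: NNPP => ny; exact: (hQU y (conj hyR ny) hy).
exists Q; split => //; split => //; move=> y; split; first exact: hQR.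
move=> hy; have hyR := idsub hp2I hy; split => //.
apply: NNPP => ny.
have [u [q [t [hu [hq [ht e]]]]]] : exists u q r, U u /\ Q q /\ S r /\ u = q + y * r.
  apply: NNPP => hne.
  have hav' : avoid S P1 U (addI S Q y).
    split; first by apply: addI_ideal => //; exact: hRS.
    split.
    + move=> z hz; exists z, 0; split; first exact: hP1Q; split; first exact: sr0.
      by rewrite mulr0 addr0.
    + move=> u hu [q [r [hq [hr he]]]]; apply: hne; exists u, q, r; done.
  apply: ny; apply: (hmax _ hav').
  + move=> z hz; exists z, 0; split => //; split; first exact: sr0; by rewrite mulr0 addr0.
  + exists 0, 1; split; first exact: id0 hQ; split; first exact: sr1; by rewrite mulr1 add0r.
have [f [fmon [fR froot]]] := hint t ht.
have [huR nu] := hu.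
have hfS : forall i, S f`_i by move=> i; apply: hRS.
have hyS : S y := hRS _ hyR.
have huS : S u := hRS _ huR.
have [n hn] : exists n, size f = n.+1.
  exists (size f).-1; rewrite prednK // lt0n size_poly_eq0; exact: monic_neq0.
pose F := fun i : nat => f`_i * y ^+ (n - i) * u ^+ i.
have hg : Q (\sum_(i < size f) F i).
  have -> : \sum_(i < size f) F i =
     \sum_(i < size f) (f`_i * y ^+ (n - i) * (u ^+ i - (y * t) ^+ i)) + y ^+ n * f.[t].
    rewrite horner_coef mulr_sumr -big_split /=; apply: eq_bigr => i _.
    have hi : (i <= n)%N by rewrite -ltnS -hn.
    rewrite /F exprMn.
    have -> : y ^+ n = y ^+ (n - i) * y ^+ i by rewrite -exprD subnK.
    ring.
  move/rootP: froot => ->; rewrite mulr0 addr0.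
  apply: (idsum (F := fun i : nat => f`_i * y ^+ (n - i) * (u ^+ i - (y * t) ^+ i)) hQ) => i hi; apply: (idMl hQ).
  - by apply: srM => //; exact: srX.
  - apply: (idXB _ hS hQ huS (srM hS hyS ht)).
    by have -> : u - y * t = q by rewrite e; ring.
have hgR : R (\sum_(i < size f) F i).
  apply: (srsum (F := F) hR) => i _; rewrite /F; apply: (srM hR); [apply: (srM hR) => //; exact: (srX _ hR) | exact: (srX _ hR)].
have hgp := hQR _ (conj hg hgR).
have hsplit : \sum_(i < size f) F i = u ^+ n + y * \sum_(i < n) (f`_i * y ^+ (n - i.+1) * u ^+ i).
  rewrite hn big_ord_recr /= addrC mulr_sumr; congr (_ + _).
    rewrite /F subnn expr0 mulr1.
    have : lead_coef f = 1 by apply/monicP.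
    by rewrite lead_coefE hn /= => ->; rewrite mul1r.
  apply: eq_bigr => i _; rewrite /F.
  have hi : (i < n)%N := ltn_ord i.
  rewrite -(subnSK hi) exprS; ring.
have hun : p2 (u ^+ n).
  have -> : u ^+ n = \sum_(i < size f) F i - y * \sum_(i < n) (f`_i * y ^+ (n - i.+1) * u ^+ i).
    by rewrite hsplit; ring.
  apply: (idB hp2I) => //; apply: (idMr hp2I) => //.
  apply: (srsum (F := fun i : nat => f`_i * y ^+ (n - i.+1) * u ^+ i) hR) => i _; apply: (srM hR); [apply: (srM hR) => //; exact: (srX _ hR) | exact: (srX _ hR)].
case: n {hn F hg hgR hgp hsplit} hun => [|m] hun.
  by rewrite expr0 in hun.
by apply: nu; apply: (prime_pow hp2 hR huR hun).
Qed.
Definition extI S Q P0 : K -> Prop := fun z => exists a u, P0 a /\ (S u /\ ~ Q u) /\ z = a / u.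

Lemma nQ_neq0 S Q u : prime_ideal S Q -> ~ Q u -> u != 0.
Proof. move=> [hQ _] nu; apply/eqP => e; apply: nu; rewrite e; exact: id0 hQ. Qed.

Lemma contr_prime A B P : is_subring A -> is_subring B -> (forall x, A x -> B x) ->
  prime_ideal B P -> prime_ideal A (contr A P).
Proof.
move=> hA hB hAB [hP [hP1 hPp]]; split; last split.
- split; last split; last split.
  + by move=> x [].
  + split; [exact: id0 hP | exact: sr0].
  + move=> x y [hx hxA] [hy hyA]; split; [exact: idB hP hx hy | exact: srB].
  + move=> a x ha [hx hxA]; split; [apply: (idMl hP) => //; exact: hAB | exact: srM].
- by case.
- move=> a b ha hb [hab _]; case: (hPp _ _ (hAB _ ha) (hAB _ hb) hab) => h; [left|right]; by split.
Qed.

Section Loc.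
Variables (S Q : K -> Prop).
Hypothesis hS : is_subring S.
Hypothesis hQ : prime_ideal S Q.
Let T := loc_at S Q.

Lemma loc_subring : is_subring T.
Proof.
have hQ1 : ~ Q 1 by case: hQ => _ [].
split; last split.
- exists 1, 1; split; first exact: sr1; split; [split => //; exact: sr1 | by rewrite divr1].
- move=> x y [a [u [ha [[hu nu] ->]]]] [b [v [hb [[hv nv] ->]]]].
  exists (a * v - b * u), (u * v); split; first by apply: srB => //; apply: srM.
  split; first split; first exact: srM.
    by case: hQ => _ [_ hp] /(hp _ _ hu hv) [].
  have := nQ_neq0 hQ nu; have := nQ_neq0 hQ nv => h1 h2.
  by field; apply/andP.
- move=> x y [a [u [ha [[hu nu] ->]]]] [b [v [hb [[hv nv] ->]]]].
  exists (a * b), (u * v); split; first by apply: srM.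
  split; first split; first exact: srM.
    by case: hQ => _ [_ hp] /(hp _ _ hu hv) [].
  have := nQ_neq0 hQ nu; have := nQ_neq0 hQ nv => h1 h2.
  by field; apply/andP.
Qed.

Lemma loc_S x : S x -> T x.
Proof.
move=> hx; have hQ1 : ~ Q 1 by case: hQ => _ [].
exists x, 1; split => //; split; [split => //; exact: sr1 | by rewrite divr1].
Qed.

Lemma loc_inv u : S u -> ~ Q u -> T u^-1.
Proof. move=> hu nu; exists 1, u; split; first exact: sr1; split => //; by rewrite div1r. Qed.

Lemma ext_S P0 z : prime_ideal S P0 -> (forall y, P0 y -> Q y) -> extI S Q P0 z -> S z -> P0 z.
Proof.
move=> [hP0 [_ hp]] hPQ [a [u [ha [[hu nu] e]]]] hz.
have hza : z * u = a by rewrite e; have := nQ_neq0 hQ nu => h; field.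
rewrite -hza in ha; case: (hp _ _ hz hu ha) => // /hPQ //.
Qed.

Lemma ext_prime P0 : prime_ideal S P0 -> (forall y, P0 y -> Q y) -> prime_ideal T (extI S Q P0).
Proof.
move=> hP0 hPQ; have [hP0I [hP01 hP0p]] := hP0.
have hQp : forall u v, S u -> S v -> ~ Q u -> ~ Q v -> ~ Q (u * v).
  by move=> u v hu hv nu nv; case: hQ => _ [_ hp] /(hp _ _ hu hv) [].
split; last split.
- split; last split; last split.
  + move=> z [a [u [ha [[hu nu] ->]]]]; exists a, u; split => //; exact: idsub hP0I ha.
  + exists 0, 1; split; first exact: id0 hP0I; split; last by rewrite mul0r.
    split; [exact: sr1 | by case: hQ => _ []].
  + move=> x y [a [u [ha [[hu nu] ->]]]] [b [v [hb [[hv nv] ->]]]].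
    exists (a * v - b * u), (u * v); split.
      by apply: (idB hP0I); apply: (idMr hP0I).
    split; first by split; [exact: srM | exact: hQp].
    have := nQ_neq0 hQ nu; have := nQ_neq0 hQ nv => h1 h2.
    by field; apply/andP.
  + move=> t z [b [v [hb [[hv nv] ->]]]] [a [u [ha [[hu nu] ->]]]].
    exists (b * a), (v * u); split; first exact: (idMl hP0I).
    split; first by split; [exact: srM | exact: hQp].
    have := nQ_neq0 hQ nu; have := nQ_neq0 hQ nv => h1 h2.
    by field; apply/andP.
- move=> [a [u [ha [[hu nu] e]]]]; have h := nQ_neq0 hQ nu; apply: nu; apply: hPQ.
  have -> : u = a by have := congr1 (fun w => w * u) e; rewrite mul1r => ->; field.
  done.
- move=> t1 t2 [b1 [v1 [hb1 [[hv1 nv1] ->]]]] [b2 [v2 [hb2 [[hv2 nv2] ->]]]]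
    [a [u [ha [[hu nu] e]]]].
  have h1 := nQ_neq0 hQ nv1; have h2 := nQ_neq0 hQ nv2; have h3 := nQ_neq0 hQ nu.
  have e2 : b1 * b2 * u = a * (v1 * v2).
    have -> : b1 * b2 * u = (b1 / v1 * (b2 / v2)) * (v1 * v2 * u) by fld.
    rewrite e; fld.
  have hP : P0 (b1 * b2 * u) by rewrite e2; apply: (idMr hP0I) => //; exact: srM.
  case: (hP0p _ _ (srM hS hb1 hb2) hu hP) => [h|/hPQ //].
  case: (hP0p _ _ hb1 hb2 h) => h'; [left|right].
  + by exists b1, v1.
  + by exists b2, v2.
Qed.

Lemma loc_unit z : T z -> ~ extI S Q Q z -> z != 0 /\ T z^-1.
Proof.
move=> [b [v [hb [[hv nv] e]]]] nz.
have nb : ~ Q b by move=> qb; apply: nz; exists b, v.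
have h1 := nQ_neq0 hQ nb; have h2 := nQ_neq0 hQ nv.
split; first by rewrite e mulf_neq0 // invr_neq0.
exists v, b; split => //; split => //; rewrite e invfM invrK mulrC //.
Qed.

Lemma loc_local : local_ring T.
Proof.
have hT := loc_subring.
have hMp := ext_prime hQ (fun y h => h).
have [hM [hM1 _]] := hMp.
have unit1 : forall J, is_ideal T J -> forall z, J z -> ~ extI S Q Q z -> J 1.
  move=> J hJ z hz nz; have [z0 zi] := loc_unit (idsub hJ hz) nz.
  have := idMl hJ zi hz; by rewrite mulVf.
exists (extI S Q Q); split.
- split => //; split => // J hJ hMJ.
  case: (classic (forall y, J y -> extI S Q Q y)) => h.
    by left => y; split; [exact: h | exact: hMJ].
  right; move: (not_all_ex_not _ _ h) => [z' hz'].
  exact: (unit1 _ hJ z' (not_imply_elim _ _ hz') (not_imply_elim2 _ _ hz')).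
- move=> N [hN [hN1 hNm]].
  have hNM : forall y, N y -> extI S Q Q y.
    by move=> y hy; apply: NNPP => ny; apply: hN1; exact: unit1 _ hN y hy ny.
  case: (hNm _ hM hNM) => // h y; split; [exact: hNM | by move/h].
Qed.

End Loc.
Lemma core (R S : K -> Prop) : is_subring R -> perinormal R -> overring R S -> integral_over R S ->
  spec_bijective R S -> forall x, S x -> R x.
Proof.
move=> hR hper hov hint [hLO hinj] x hx.
have [hS hRS] := hov.
apply: NNPP => nx.
pose I := fun r => R r /\ R (r * x).
have hI : is_ideal R I.
  split; last split; last split.
  - by move=> r [].
  - split; [exact: sr0 | rewrite mul0r; exact: sr0].
  - move=> a b [ha hax] [hb hbx]; split; first exact: srB.
    by rewrite mulrBl; apply: srB.
  - move=> a r ha [hr hrx]; split; first exact: srM.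
    by rewrite -mulrA; apply: srM.
pose U1 := fun u : K => u = 1.
have hdis : forall u, U1 u -> ~ I u by move=> u -> [_]; rewrite mul1r.
have [m [hav hmax]] := zorn_ideal hI hdis.
have hm : prime_ideal R m.
  apply: (avoid_max_prime hR _ _ hav hmax) => //.
  by move=> u v -> ->; rewrite mul1r.
have [hmI [hIm _]] := hav.
have [Q [hQ hQm]] := hLO m hm.
pose T := loc_at S Q.
have hT := loc_subring hS hQ.
have hovT : overring R T by split => // y hy; apply: (loc_S hS hQ); exact: hRS.
have hgd : going_down R T.
  move=> p q Q' hp hq hpq hQ' hQ'q.
  have hQ'' : prime_ideal S (contr S Q').
    by apply: (contr_prime hS hT) => // y; exact: (loc_S hS hQ).
  have hQ''q : set_eq (contr R (contr S Q')) q.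
    move=> y; split.
      by move=> [[h1 _] h2]; apply/(hQ'q y); split.
    by move/(hQ'q y) => [h1 h2]; split => //; split => //; exact: hRS.
  have [P0 [hP0 hP0p]] := hLO p hp.
  have [Q3 [hQ3 [hP0Q3 hQ3q]]] : exists Q3, prime_ideal S Q3 /\ (forall y, P0 y -> Q3 y) /\
      set_eq (contr R Q3) q.
    apply: (going_up hR hov hint hP0 hq) => y /(hP0p y); exact: hpq.
  have e3 : set_eq Q3 (contr S Q').
    apply: hinj => // y; rewrite hQ3q; split; by move/(hQ''q y).
  have hQ''Q : forall y, contr S Q' y -> Q y.
    move=> y [hy hyS]; apply: NNPP => ny.
    have hyi := loc_inv hS hyS ny.
    have [_ [hQ'1 _]] := hQ'.
    have h1 : y^-1 * y = 1 by rewrite mulVf //; exact: nQ_neq0 hQ ny.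
    apply: hQ'1; rewrite -h1; exact: (idMl hQ'.1 hyi hy).
  have hP0Q : forall y, P0 y -> Q y.
    by move=> y /hP0Q3 /(e3 y) /hQ''Q.
  exists (extI S Q P0); split; first exact: ext_prime.
  split.
  - move=> z [a [u [ha [[hu nu] ->]]]].
    rewrite mulrC; apply: (idMl hQ'.1); first exact: loc_inv.
    by have [] := (e3 a).1 (hP0Q3 _ ha).
  - move=> y; split.
    + move=> [hy hyR]; apply/(hP0p y); split => //.
      exact: (ext_S hQ hP0 hP0Q hy (hRS _ hyR)).
    + move/(hP0p y) => [hy hyR]; split => //.
      exists y, 1; split => //; split; last by rewrite divr1.
      by split; [exact: sr1 | case: hQ => _ []].
have [U [[hUR [hU1 [hU0 hUM]]] hTU]] := hper T hovT (loc_local hS hQ) hgd.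
have [a [u [ha [hu e]]]] := (hTU x).1 (loc_S hS hQ hx).
have hu0 : u != 0 by apply/eqP => e0; apply: hU0; rewrite -e0.
have [b [v [hb [[hv nv] e']]]] : T u^-1.
  apply/(hTU _).2; exists 1, u; split; first exact: sr1; split => //; by rewrite div1r.
have hv0 := nQ_neq0 hQ nv.
have ev : v = u * b.
  have h := congr1 (fun w => w * v * u) e'; simpl in h.
  rewrite mulrAC mulVf // mul1r in h; rewrite h; fld.
have num : ~ m u.
  move=> mu; have [hQQ _] := hQ; apply: nv; rewrite ev.
  apply: (idMr hQQ) => //; by case: ((hQm u).2 mu).
apply: num; apply: hIm; split; first exact: hUR.
have -> : u * x = a by rewrite e; fld.
done.
Qed.
Ltac rin hR := repeat first [assumption | exact: (sr0 hR) | exact: (sr1 hR) | apply: (srD hR) | apply: (srB hR) | apply: (srM hR) | apply: (srN hR) | apply: (srX _ hR)].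
Section Semi.
Variables (R : K -> Prop) (x : K).
Hypotheses (hR : is_subring R) (hx2 : R (x ^+ 2)) (hx3 : R (x ^+ 3)).

Definition Sx : K -> Prop := fun s => exists a b, R a /\ R b /\ s = a + b * x.

Lemma Sx_subring : is_subring Sx.
Proof.
split; last split.
- exists 1, 0; split; first exact: sr1; split; first exact: sr0; by rewrite mul0r addr0.
- move=> s t [a [b [ha [hb ->]]]] [c [d [hc [hd ->]]]].
  exists (a - c), (b - d); split; first exact: srB; split; first exact: srB; ring.
- move=> s t [a [b [ha [hb ->]]]] [c [d [hc [hd ->]]]].
  exists (a * c + b * d * x ^+ 2), (a * d + b * c); split.
    by rin hR.
  split; first by rin hR.
  ring.
Qed.

Lemma R_Sx r : R r -> Sx r.
Proof. move=> hr; exists r, 0; split => //; split; first exact: sr0; by rewrite mul0r addr0. Qed.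

Lemma x_Sx : Sx x.
Proof. exists 0, 1; split; first exact: sr0; split; first exact: sr1; by rewrite mul1r add0r. Qed.

Lemma Sx2 s : Sx s -> R (x ^+ 2 * s).
Proof.
move=> [a [b [ha [hb ->]]]].
have -> : x ^+ 2 * (a + b * x) = a * x ^+ 2 + b * x ^+ 3 by ring.
by rin hR.
Qed.

Lemma Sx3 s : Sx s -> R (x ^+ 3 * s).
Proof.
move=> [a [b [ha [hb ->]]]].
have -> : x ^+ 3 * (a + b * x) = a * x ^+ 3 + b * (x ^+ 2 * x ^+ 2) by ring.
by rin hR.
Qed.

Lemma Sx_integral : integral_over R Sx.
Proof.
move=> s [a [b [ha [hb ->]]]].
pose c1 := - (a + a); pose c0 := a ^+ 2 - b ^+ 2 * x ^+ 2.
have hc1 : R c1 by rewrite /c1; rin hR.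
have hc0 : R c0 by rewrite /c0; rin hR.
exists (('X + c1%:P) * 'X + c0%:P); split; last split.
- apply/monicP; rewrite lead_coefDl.
    by rewrite lead_coefMX; apply/monicP; exact: monicXaddC.
  rewrite size_mulX; last by rewrite -size_poly_eq0 size_XaddC.
  rewrite size_XaddC; apply: leq_ltn_trans (size_polyC_leq1 _) _; done.
- move=> i; rewrite coefD coefMX coefC coefD coefX coefC.
  repeat case: ifP => _;
  repeat first [assumption | apply: (srD hR) | exact: (sr0 hR) | exact: (srnat _ hR)].
- apply/rootP; rewrite hornerD hornerMX hornerD hornerX !hornerC /c1 /c0; ring.
Qed.

Section Lift.
Variable p : K -> Prop.
Hypothesis hp : prime_ideal R p.

Lemma char1 P : prime_ideal Sx P -> set_eq (contr R P) p -> p (x ^+ 2) ->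
  forall s, P s <-> exists a b, p a /\ R b /\ s = a + b * x.
Proof.
move=> hP hPp hc2 s.
have hS := Sx_subring.
have [hPI _] := hP.
have hxP : P x.
  have [h _] := (hPp (x ^+ 2)).2 hc2.
  exact: (prime_pow (n := 1) hP hS x_Sx).
have hbx : forall b, R b -> P (b * x).
  by move=> b hb; apply: (idMl hPI) => //; exact: R_Sx.
split.
- move=> hs; have [a [b [ha [hb e]]]] := idsub hPI hs.
  exists a, b; split => //; apply/(hPp a); split => //.
  have -> : a = s - b * x by rewrite e; ring.
  by apply: (idB hPI) => //; exact: hbx.
- move=> [a [b [ha [hb ->]]]]; apply: (idD hPI); last exact: hbx.
  by have [] := (hPp a).2 ha.
Qed.

Lemma char2 P : prime_ideal Sx P -> set_eq (contr R P) p -> ~ p (x ^+ 2) ->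
  forall s, P s <-> Sx s /\ p (x ^+ 2 * s).
Proof.
move=> hP hPp nc2 s.
have hS := Sx_subring.
have [hPI [_ hPp']] := hP.
split.
- move=> hs; have hsS := idsub hPI hs; split => //.
  apply/(hPp _); split; last exact: Sx2.
  by apply: (idMl hPI) => //; exact: R_Sx.
- move=> [hsS hc]; have [hc' _] := (hPp _).2 hc.
  case: (hPp' _ _ (R_Sx hx2) hsS hc') => // h.
  by case: nc2; apply/(hPp _); split.
Qed.

Definition lift1 : K -> Prop := fun s => exists a b, p a /\ R b /\ s = a + b * x.
Definition lift2 : K -> Prop := fun s => Sx s /\ p (x ^+ 2 * s).

Lemma sq_in_p w : R w -> p (w ^+ 2) -> p w.
Proof. move=> hw h; exact: (prime_pow (n := 1) hp hR hw h). Qed.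

Lemma lift1_prime : p (x ^+ 2) -> prime_ideal Sx lift1 /\ set_eq (contr R lift1) p.
Proof.
move=> hc2.
have [hpI [hp1 hpp]] := hp.
have hS := Sx_subring.
have key : forall a b r, p a -> R b -> R r -> r = a + b * x -> p r.
  move=> a b r ha hb hr e.
  have haR := idsub hpI ha.
  have hw : R (b * x).
    have -> : b * x = r - a by rewrite e; ring.
    by rin hR.
  have hw2 : p ((b * x) ^+ 2) by rewrite exprMn; apply: (idMl hpI) => //; exact: (srX _ hR).
  have := sq_in_p hw hw2 => hbx.
  by rewrite e; apply: (idD hpI).
split; last first.
  move=> r; split.
    by move=> [[a [b [ha [hb e]]]] hr]; exact: key ha hb hr e.
  move=> hr; have hrR := idsub hpI hr; split => //.
  by exists r, 0; split => //; split; [exact: sr0 | rewrite mul0r addr0].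
split; last split.
- split; last split; last split.
  + move=> s [a [b [ha [hb ->]]]]; exists a, b; split => //; exact: idsub hpI ha.
  + exists 0, 0; split; first exact: id0 hpI; split; [exact: sr0 | by rewrite mul0r addr0].
  + move=> s t [a [b [ha [hb ->]]]] [c [d [hc [hd ->]]]].
    exists (a - c), (b - d); split; first exact: idB hpI ha hc.
    split; [exact: srB | ring].
  + move=> t s [c [d [hc [hd ->]]]] [a [b [ha [hb ->]]]].
    exists (c * a + d * b * x ^+ 2), (c * b + d * a); split.
      apply: (idD hpI); first exact: idMl hpI hc ha.
      by apply: (idMl hpI) => //; exact: srM.
    split; first by have ? := idsub hpI ha; rin hR.
    ring.
- move=> [a [b [ha [hb e]]]]; apply: hp1; apply: key ha hb _ e; exact: sr1.
- move=> s t [a [b [ha [hb ->]]]] [c [d [hc [hd ->]]]] [e [f [he [hf E]]]].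
  have haR := ha; have hcR := hc.
  pose w := (a * c + b * d * x ^+ 2) - e.
  have hwR : R w.
    by have ? := idsub hpI he; rin hR.
  have hwe : w = (f - (a * d + b * c)) * x.
    rewrite /w; have : (a + b * x) * (c + d * x) = e + f * x by [].
    by move=> _; rewrite -[e](addrK (f * x)) -E; ring.
  have hw : p w.
    apply: sq_in_p => //; rewrite hwe exprMn; apply: (idMl hpI) => //.
    rin hR.
  have hac : p (a * c).
    have -> : a * c = e + w - b * d * x ^+ 2 by rewrite /w; ring.
    apply: (idB hpI); first exact: (idD hpI he hw).
    by apply: (idMl hpI) => //; rin hR.
  case: (hpp _ _ haR hcR hac) => h; [left; exists a, b | right; exists c, d]; done.
Qed.

Lemma lift2_prime : ~ p (x ^+ 2) -> prime_ideal Sx lift2 /\ set_eq (contr R lift2) p.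
Proof.
move=> nc2.
have [hpI [hp1 hpp]] := hp.
have hS := Sx_subring.
split; last first.
  move=> r; split.
    move=> [[hrS hc] hr]; case: (hpp _ _ hx2 hr hc) => //.
  move=> hr; have hrR := idsub hpI hr; split => //; split; first exact: R_Sx.
  exact: idMl hpI hx2 hr.
split; last split.
- split; last split; last split.
  + by move=> s [].
  + split; first exact: sr0; rewrite mulr0; exact: id0 hpI.
  + move=> s t [hs hps] [ht hpt]; split; first exact: srB.
    by rewrite mulrBr; apply: (idB hpI).
  + move=> t s ht [hs hps]; split; first exact: srM.
    have h3 : p (x ^+ 3 * s).
      have hh : p (x ^+ 2 * (x ^+ 3 * s)).
        have -> : x ^+ 2 * (x ^+ 3 * s) = x ^+ 3 * (x ^+ 2 * s) by ring.
        exact: idMl hpI hx3 hps.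
      by case: (hpp _ _ hx2 (Sx3 hs) hh).
    move: ht => [c [d [hc [hd ->]]]].
    have -> : x ^+ 2 * ((c + d * x) * s) = c * (x ^+ 2 * s) + d * (x ^+ 3 * s) by ring.
    by apply: (idD hpI); apply: (idMl hpI).
- by move=> [_]; rewrite mulr1.
- move=> s t hs ht [hst hc].
  have hh : p ((x ^+ 2 * s) * (x ^+ 2 * t)).
    have -> : (x ^+ 2 * s) * (x ^+ 2 * t) = x ^+ 2 * (x ^+ 2 * (s * t)) by ring.
    exact: idMl hpI hx2 hc.
  case: (hpp _ _ (Sx2 hs) (Sx2 ht) hh) => h; [left|right]; done.
Qed.

End Lift.

Lemma Sx_spec : spec_bijective R Sx.
Proof.
have hS := Sx_subring.
split.
- move=> p hp; case: (classic (p (x ^+ 2))) => h.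
  + by exists (lift1 p); apply: lift1_prime.
  + by exists (lift2 p); apply: lift2_prime.
- move=> P1 P2 hP1 hP2 e12.
  have hp := contr_prime hR hS R_Sx hP1.
  have e1 : set_eq (contr R P1) (contr R P1) by [].
  have e2 : set_eq (contr R P2) (contr R P1) by move=> y; split; move/(e12 y).
  case: (classic (contr R P1 (x ^+ 2))) => h s.
  + rewrite (char1 hP1 e1 h) (char1 hP2 e2 h); done.
  + rewrite (char2 hP1 e1 h) (char2 hP2 e2 h); done.
Qed.

End Semi.

Lemma semi_main (R : K -> Prop) : is_subring R -> perinormal R -> seminormal R.
Proof.
move=> hR hper x hx2 hx3.
apply: (core (S := Sx R x) hR hper).
- split; [exact: Sx_subring | exact: R_Sx].
- exact: Sx_integral.
- exact: Sx_spec.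
- exact: x_Sx.
Qed.

Lemma wn_main (R : K -> Prop) : is_subring R -> perinormal R -> weakly_normal R.
Proof.
move=> hR hper S hov hint hsp _ y; split; first exact: (core hR hper hov hint hsp).
by case: hov => _; apply.
Qed.

End Work.

Theorem corollary3p4 (K : fieldType) (R : K -> Prop) :
  is_subring R -> is_frac_field R -> perinormal R ->
  weakly_normal R /\ seminormal R.
Proof.
move=> hR _ hper; split; [exact: wn_main | exact: semi_main].
Qed.
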